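(* Let $\ell$ and $m$ be positive integers with $\ell\le m$, let $G$ be a group written additively, let $\mathbf{a}=(a_1,\dots,a_m)$ be a sequence of elements of $G$, and let $A$ be the set of distinct terms of $\mathbf{a}$. Then \[ |\Sigma^{\ell}(\mathbf{a})|\ \ge\ \min\Big(p(G),\ \sum_{a\in A}\mu_{\mathbf{a}}(a)-\ell+1\Big). \]
   Context: $p(G)$ is the order of the smallest nontrivial subgroup of $G$, or $\infty$ if no such subgroup exists. $\Sigma^{\ell}(\mathbf{a})$ is the set of all elements $a_{i_1}+\cdots+a_{i_\ell}$ with $i_1,\dots,i_\ell\in[1,m]$ pairwise distinct, taken in any order. $\rho_a(\mathbf{a})=|\{i\in[1,m]:a_i=a\}|$ and $\mu_{\mathbf{a}}(a)=\min(\ell,\rho_a(\mathbf{a}))$. *)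

(* Defs.v *)
(* The group G is a (possibly infinite, possibly
   non-abelian) group, modelled by MathComp's [groupType] from
   boot/monoid.v; the paper's additive notation a + b is rendered as the
   group law [mul a b], and 0 as [one]. *)
From mathcomp Require Import all_boot.
Set Implicit Arguments.
Unset Strict Implicit.
Unset Printing Implicit Defensive.

Definition fin_nontriv_subgroup (G : groupType) (s : seq G) : Prop :=
  [/\ uniq s, group_closed [pred x | x \in s] & has (fun x => x != one) s].

(* [is_pG G p] : p is p(G), the order of the smallest nontrivial subgroup
   of G; [None] encodes p(G) = infinity (no nontrivial subgroup of finite
   order; infinite subgroups have infinite order). *)
Definition is_pG (G : groupType) (p : option nat) : Prop :=
  match p with
  | Some n => (exists s : seq G, fin_nontriv_subgroup s /\ size s = n) /\
              (forall s : seq G, fin_nontriv_subgroup s -> n <= size s)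
  | None => forall s : seq G, ~ fin_nontriv_subgroup s
  end.

Definition min_opt (p : option nat) (k : nat) : nat :=
  match p with Some n => minn n k | None => k end.

(* Sigma^l(a): all sums a_{i_1} + ... + a_{i_l} with i_1, ..., i_l pairwise
   distinct indices, in any order (the order being i_1, ..., i_l), as a
   duplicate-free list. *)
Definition sigma_l (G : groupType) (m l : nat) (a : 'I_m -> G) : seq G :=
  undup [seq \big[mul/one]_(k < l) a (f k)
        | f : {ffun 'I_l -> 'I_m} <- enum {ffun 'I_l -> 'I_m}
        & injectiveb (fun k => f k)].

Definition rho (G : groupType) (m : nat) (a : 'I_m -> G) (x : G) : nat :=
  #|[pred i | a i == x]|.

Definition mu (G : groupType) (m l : nat) (a : 'I_m -> G) (x : G) : nat :=
  minn l (rho a x).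

(* Main.v *)
Require Import Defs.
From mathcomp Require Import all_boot.
From mathcomp Require Import finmap boolp zify.
From Stdlib Require Import Classical.
Set Implicit Arguments.
Unset Strict Implicit.
Unset Printing Implicit Defensive.

Section Aux.
Local Open Scope fset_scope.
Local Open Scope group_scope.

Definition pw (G : groupType) (X B : {fset G}) : {fset G} := [fset x * b | x in X, b in B].
Definition lmul (G : groupType) (g : G) (X : {fset G}) : {fset G} := [fset g * x | x in X].
Definition rmul (G : groupType) (X : {fset G}) (g : G) : {fset G} := [fset x * g | x in X].
Definition finvs (G : groupType) (X : {fset G}) : {fset G} := [fset x^-1 | x in X].

Lemma pwP (G : groupType) (X B : {fset G}) y :
  reflect (exists x b, [/\ x \in X, b \in B & y = x * b]) (y \in pw X B).
Proof.
apply: (iffP (imfset2P _ _ _ _ _)).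
  by move=> [x xX [b bB ->]]; exists x, b.
by move=> [x [b [xX bB ->]]]; exists x => //; exists b.
Qed.

Lemma mem_pw (G : groupType) (X B : {fset G}) x b :
  x \in X -> b \in B -> x * b \in pw X B.
Proof. by move=> xX bB; apply/pwP; exists x, b. Qed.

Lemma lmulP (G : groupType) g (X : {fset G}) y :
  (y \in lmul g X) = (g^-1 * y \in X).
Proof.
apply/imfsetP/idP => [[x /= xX ->]|yX]; first by rewrite mulKg.
by exists (g^-1 * y) => //; rewrite mulVKg.
Qed.

Lemma rmulP (G : groupType) g (X : {fset G}) y :
  (y \in rmul X g) = (y * g^-1 \in X).
Proof.
apply/imfsetP/idP => [[x /= xX ->]|yX]; first by rewrite mulgK.
by exists (y * g^-1) => //; rewrite mulgVK.
Qed.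

Lemma finvsP (G : groupType) (X : {fset G}) y :
  (y \in finvs X) = (y^-1 \in X).
Proof.
apply/imfsetP/idP => [[x /= xX ->]|yX]; first by rewrite invgK.
by exists (y^-1) => //; rewrite invgK.
Qed.

Lemma card_lmul (G : groupType) g (X : {fset G}) : #|` lmul g X| = #|` X|.
Proof. by rewrite /lmul card_imfset //=; apply: mulgI. Qed.

Lemma card_rmul (G : groupType) g (X : {fset G}) : #|` rmul X g| = #|` X|.
Proof. by rewrite /rmul card_imfset //=; apply: mulIg. Qed.

Lemma card_finvs (G : groupType) (X : {fset G}) : #|` finvs X| = #|` X|.
Proof. by rewrite /finvs card_imfset //=; apply: invg_inj. Qed.

Lemma finvsK (G : groupType) (X : {fset G}) : finvs (finvs X) = X.
Proof. by apply/fsetP => y; rewrite !finvsP invgK. Qed.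

Lemma pw_lmul (G : groupType) g (X B : {fset G}) : pw (lmul g X) B = lmul g (pw X B).
Proof.
apply/fsetP => y; rewrite lmulP; apply/pwP/pwP.
  move=> -[x [b [xX bB ->]]].
  by exists (g^-1 * x), b; split => //; [rewrite -lmulP | rewrite mulgA].
move=> -[x [b [xX bB e]]].
exists (g * x), b; split => //; first by rewrite lmulP mulKg.
by rewrite -mulgA -e mulVKg.
Qed.

Lemma pw_rmul (G : groupType) g (A B : {fset G}) : pw A (rmul B g) = rmul (pw A B) g.
Proof.
apply/fsetP => y; rewrite rmulP; apply/pwP/pwP.
  move=> -[x [b [xX bB ->]]].
  by exists x, (b * g^-1); split => //; [rewrite -rmulP | rewrite mulgA].
move=> -[x [b [xX bB e]]].
exists x, (b * g); split => //; first by rewrite rmulP mulgK.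
by rewrite mulgA -e mulgVK.
Qed.

Lemma pw_sub (G : groupType) (X X' B B' : {fset G}) :
  X `<=` X' -> B `<=` B' -> pw X B `<=` pw X' B'.
Proof.
move=> /fsubsetP sX /fsubsetP sB; apply/fsubsetP => y /pwP [x [b [xX bB ->]]].
by apply: mem_pw; [apply: sX | apply: sB].
Qed.

Lemma pw1 (G : groupType) (X B : {fset G}) : 1 \in B -> X `<=` pw X B.
Proof. by move=> B1; apply/fsubsetP => x xX; rewrite -[x]mulg1 mem_pw. Qed.

Lemma card_pw1 (G : groupType) (X B : {fset G}) : 1 \in B -> #|` X| <= #|` pw X B|.
Proof. by move=> B1; apply: fsubset_leq_card; apply: pw1. Qed.


Lemma pG_sub (G : groupType) (p : option nat) (H : {fset G}) : is_pG G p -> 1 \in H ->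
  (forall x y, x \in H -> y \in H -> x * y^-1 \in H) ->
  (exists2 x, x \in H & x != 1) -> exists2 n, p = Some n & (n <= #|` H|)%N.
Proof.
move=> pG H1 Hd [x xH x1].
have fn : fin_nontriv_subgroup (enum_fset H).
  split; first exact: fset_uniq.
    by split => // u v; apply: Hd.
  by apply/hasP; exists x.
case: p pG => [n [_ Hle]|Hn]; last by case: (Hn _ fn).
by exists n => //; apply: Hle.
Qed.

Lemma min_opt_le p k : (min_opt p k <= k)%N.
Proof. by case: p => //= n; rewrite geq_minr. Qed.

Lemma min_opt_leS p k n : p = Some n -> (min_opt p k <= n)%N.
Proof. by move=> ->; rewrite /= geq_minl. Qed.

Lemma ex_min (P : nat -> Prop) : (exists n, P n) -> exists n, P n /\ forall m, P m -> (n <= m)%N.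
Proof.
move=> [n Pn]; apply: NNPP => hno.
have : forall k, forall j, (j <= k)%N -> ~ P j.
  elim=> [|k IH] j.
    rewrite leqn0 => /eqP -> P0; apply: hno; exists 0%N; split => //.
  rewrite leq_eqVlt => /orP [/eqP -> Pk|]; last by apply: IH.
  apply: hno; exists k.+1; split => // m Pm; rewrite leqNgt; apply/negP => lt.
  by apply: (IH m).
by move=> /(_ n n (leqnn n)).
Qed.


Definition gen (G : groupType) (K : {pred G}) (B : {fset G}) :=
  forall H : {fset G}, 1 \in H -> (forall x y, x \in H -> y \in H -> x * y^-1 \in H) ->
  {subset B <= H} -> {subset K <= H}.

Definition frag (G : groupType) (K : {pred G}) (B X : {fset G}) :=
  [/\ X != fset0, {subset X <= K} & exists2 k, k \in K & k \notin pw X B].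

Lemma core (G : groupType) (p : option nat) (K : {pred G}) (B H0 : {fset G}) (kap al : nat) :
  is_pG G p ->
  1 \in K -> (forall x y, x \in K -> y \in K -> x * y^-1 \in K) ->
  1 \in B -> {subset B <= K} -> gen K B ->
  (forall X, frag K B X -> (kap + #|` X| <= #|` pw X B|)%N) ->
  (forall X, frag K (finvs B) X -> (kap + #|` X| <= #|` pw X (finvs B)|)%N) ->
  (forall X, frag K B X -> #|` pw X B| = (#|` X| + kap)%N -> (al <= #|` X|)%N) ->
  (forall X, frag K (finvs B) X -> #|` pw X (finvs B)| = (#|` X| + kap)%N -> (al <= #|` X|)%N) ->
  frag K B H0 -> #|` pw H0 B| = (#|` H0| + kap)%N -> #|` H0| = al ->
  (#|` B| <= kap.+1)%N \/ exists2 n, p = Some n & (n <= kap)%N.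
Proof.
move=> pG K1 Kd B1 BK genB Hm Hm' Ha Ha' fH0 eH0 aH0.
have Kinv x : x \in K -> x^-1 \in K.
  by move=> xK; rewrite -[x^-1]mul1g; apply: Kd.
have Km x y : x \in K -> y \in K -> x * y \in K.
  by move=> xK yK; rewrite -[y]invgK; apply: Kd => //; apply: Kinv.
have pwK X C : {subset X <= K} -> {subset C <= K} -> {subset pw X C <= K}.
  by move=> XK CK y /pwP [x [b [xX bB ->]]]; apply: Km; auto.
have B'K : {subset finvs B <= K}.
  by move=> y; rewrite finvsP => /BK /Kinv; rewrite invgK.
pose atom X := [/\ frag K B X, #|` pw X B| = (#|` X| + kap)%N & #|` X| = al].
have atomL g X : g \in K -> atom X -> atom (lmul g X).
  move=> gK [[Xn XK [k kK kX]] eX aX]; split; last 2 first.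
  - by rewrite pw_lmul !card_lmul.
  - by rewrite card_lmul.
  split.
  - by rewrite -cardfs_gt0 card_lmul cardfs_gt0.
  - move=> y; rewrite lmulP => /XK yK; have := Km _ _ gK yK.
    by rewrite mulVKg.
  - exists (g * k); first by apply: Km.
    by rewrite pw_lmul lmulP mulKg.
have inter X Y x : atom X -> atom Y -> x \in X -> x \in Y -> X `<=` Y.
  move=> [[Xn XK [k kK kX]] eX aX] [[Yn YK _] eY aY] xX xY.
  set I := X `&` Y; set U := X `|` Y.
  have xI : x \in I by rewrite in_fsetI xX xY.
  have IX : I `<=` X := fsubsetIl X Y.
  have IY : I `<=` Y := fsubsetIr X Y.
  have fI : frag K B I.
    split.
    - by apply/fset0Pn; exists x.
    - by move=> y /(fsubsetP IX) /XK.
    - exists k => //; apply: contra kX.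
      exact: (fsubsetP (pw_sub IX (fsubset_refl B))).
  have hI := Hm _ fI.
  have cI : (0 < #|` I|)%N by rewrite cardfs_gt0; apply/fset0Pn; exists x.
  have IBsub : pw I B `<=` pw X B `&` pw Y B.
    by rewrite fsubsetI !pw_sub // fsubset_refl.
  have UBsub : pw U B `<=` pw X B `|` pw Y B.
    apply/fsubsetP => y /pwP [u [b [uU bB ->]]]; rewrite in_fsetU.
    move: uU; rewrite in_fsetU => /orP [uX|uY]; apply/orP; [left|right];
      exact: mem_pw.
  have c1 := fsubset_leq_card IBsub.
  have c2 := fsubset_leq_card UBsub.
  have c3 := cardfsUI (pw X B) (pw Y B).
  have c4 : (#|` U| + #|` I|)%N = (#|` X| + #|` Y|)%N := cardfsUI X Y.
  have UK : {subset U <= K}.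
    by move=> y; rewrite in_fsetU => /orP [/XK|/YK].
  have Un : U != fset0 by apply/fset0Pn; exists x; rewrite in_fsetU xX.
  case: (classic (exists2 k, k \in K & k \notin pw U B)) => [[k' k'K k'U]|nU].
  - have fU : frag K B U by split => //; exists k'.
    have hU := Hm _ fU.
    have eI : #|` pw I B| = (#|` I| + kap)%N.
      clear -c1 c2 c3 c4 hI hU eX eY; lia.
    have aI := Ha _ fI eI.
    have IXe : I = X by apply/eqP; rewrite eqEfcard IX /= aX; exact: aI.
    by rewrite -IXe.
  - have KU : forall k, k \in K -> k \in pw U B.
      move=> k' k'K; apply: NNPP => k'n; apply: nU; exists k' => //.
      by apply/negP.
    set Xs := pw U B `\` pw X B.
    have XsK : {subset Xs <= K}.
      by move=> y; rewrite in_fsetD => /andP [_ /(pwK _ _ UK BK)].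
    have XB_UB : pw X B `<=` pw U B := pw_sub (fsubsetUl X Y) (fsubset_refl B).
    have X_UB : X `<=` pw U B := fsubset_trans (pw1 X B1) XB_UB.
    have sub1 : pw Xs (finvs B) `<=` pw U B `\` X.
      apply/fsubsetP => y /pwP [g [b [gXs bB' ->]]]; rewrite in_fsetD.
      apply/andP; split.
      + apply/negP => gbX; move: gXs; rewrite /Xs in_fsetD => /andP [/negP gn _]; apply: gn.
        rewrite finvsP in bB'.
        by rewrite -[g](mulgK b) mem_pw.
      + by apply: KU; apply: Km; [exact: XsK | exact: B'K].
    have fXs : frag K (finvs B) Xs.
      split.
      - by apply/fset0Pn; exists k; rewrite in_fsetD kX KU.
      - exact: XsK.
      - exists x; first exact: XK.
        by apply/negP => /(fsubsetP sub1); rewrite in_fsetD xX.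
    have hXs := Hm' _ fXs.
    have c5 := fsubset_leq_card sub1.
    rewrite cardfsDS in c5 => //.
    have c6 : #|` Xs| = (#|` pw U B| - #|` pw X B|)%N by rewrite cardfsDS.
    have c7 := fsubset_leq_card XB_UB.
    have c8 := fsubset_leq_card X_UB.
    have eXs : #|` pw Xs (finvs B)| = (#|` Xs| + kap)%N.
      clear -hXs c5 c6 c7 c8 eX; lia.
    have aXs := Ha' _ fXs eXs.
    exfalso; clear -c1 c2 c3 eX eY aY hI cI aXs c6 c7; lia.
have [x0 x0H0] : exists x0, x0 \in H0 by case: fH0 => /fset0Pn.
have aH0' : atom H0 by split.
have x0K : x0 \in K by case: fH0 => _ /(_ x0 x0H0).
have [H aH H1] : exists2 H, atom H & 1 \in H.
  exists (lmul x0^-1 H0); first exact: atomL (Kinv _ x0K) aH0'.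
  by rewrite lmulP invgK mulg1.
have HK : {subset H <= K} by case: aH => -[].
have Hcl h g : h \in H -> g \in H -> h^-1 * g \in H.
  move=> hH gH; have aHh := atomL h^-1 H (Kinv _ (HK _ hH)) aH.
  have h1 : 1 \in lmul h^-1 H by rewrite lmulP invgK mulg1.
  have sub := inter _ _ 1 aHh aH h1 H1.
  by apply: (fsubsetP sub); rewrite lmulP invgK mulVKg.
have Hd x y : x \in H -> y \in H -> x * y^-1 \in H.
  move=> xH yH; have yi : y^-1 \in H by rewrite -[y^-1]mulg1; apply: Hcl.
  have xi : x^-1 \in H by rewrite -[x^-1]mulg1; apply: Hcl.
  by rewrite -[x]invgK; apply: Hcl.
case: aH => fH eH aHc.
have cH : (0 < #|` H|)%N by rewrite cardfs_gt0; apply/fset0Pn; exists 1.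
case: (ltngtP #|` H| 1%N) => [lt|gt|e1].
- by exfalso; clear -lt cH; lia.
- have [z zH z1] : exists2 z, z \in H & z != 1.
    have := cardfsD1 1 H; rewrite H1 /= => e.
    have : H `\ 1 != fset0.
      rewrite -cardfs_gt0; move: gt; rewrite e add1n ltnS => h; exact: h.
    move=> /fset0Pn [z].
    by rewrite in_fsetD1 => /andP [z1 zH]; exists z.
  have [n pn nH] := pG_sub pG H1 Hd (ex_intro2 _ _ z zH z1).
  right; exists n => //.
  have [b bB bH] : exists2 b, b \in B & b \notin H.
    apply: NNPP => nb; case: fH => _ _ [k kK kH]; apply: (negP kH).
    apply: (fsubsetP (pw1 H B1)); apply: (genB H H1 Hd) => //.
    move=> b bB; apply: NNPP => bn; apply: nb; exists b => //.
    by apply/negP.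
  have disj : H `&` rmul H b = fset0.
    apply/fsetP => y; rewrite in_fsetI rmulP in_fset0.
    apply/negP => /andP [yH ybH]; apply: (negP bH).
    have := Hcl _ _ ybH yH.
    by rewrite invgF mulgVK.
  have sub : H `|` rmul H b `<=` pw H B.
    apply/fsubsetP => y; rewrite in_fsetU rmulP => /orP [yH|ybH].
      exact: (fsubsetP (pw1 H B1)).
    by rewrite -[y](mulgVK b) mem_pw.
  have c1 := fsubset_leq_card sub; have c2 := cardfsUI H (rmul H b).
  rewrite disj cardfs0 card_rmul in c2; clear -c1 c2 eH nH; lia.
- left.
  have /cardfs1P [z Hz] : #|` H| == 1%N by rewrite e1.
  have z1 : z = 1 by move: H1; rewrite Hz in_fset1 => /eqP.
  have eB : pw H B = B.
    apply/fsetP => y; apply/pwP/idP.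
      by move=> [u [b [uH bB ->]]]; move: uH; rewrite Hz z1 in_fset1 => /eqP ->; rewrite mul1g.
    by move=> yB; exists 1, y; split => //; rewrite mul1g.
  by move: eH; rewrite eB e1 => eH; clear -eH; lia.
Qed.


Lemma card2_ex (G : groupType) (B : {fset G}) : 1 \in B -> (1 < #|` B|)%N ->
  exists2 z, z \in B & z != 1.
Proof.
move=> B1 gt; have := cardfsD1 1 B; rewrite B1 /= => e.
have : B `\ 1 != fset0.
  by rewrite -cardfs_gt0; move: gt; rewrite e add1n ltnS => h; exact: h.
by move=> /fset0Pn [z]; rewrite in_fsetD1 => /andP [z1 zB]; exists z.
Qed.

Lemma CD_K (G : groupType) (p : option nat) (K : {pred G}) (A B : {fset G}) :
  is_pG G p ->
  1 \in K -> (forall x y, x \in K -> y \in K -> x * y^-1 \in K) ->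
  1 \in B -> {subset B <= K} -> gen K B -> {subset A <= K} -> A != fset0 ->
  (min_opt p (#|` A| + #|` B| - 1) <= #|` pw A B|)%N.
Proof.
move=> pG K1 Kd B1 BK genB AK An.
have cAB := card_pw1 A B1.
case: (leqP #|` B| 1%N) => [le1|gt1].
  apply: leq_trans (min_opt_le _ _) _; move: le1 cAB.
  move: #|` B| #|` A| #|` pw A B| => b a c; lia.
have [z zB z1] := card2_ex B1 gt1.
have Kinv x : x \in K -> x^-1 \in K.
  by move=> xK; rewrite -[x^-1]mul1g; apply: Kd.
have Km x y : x \in K -> y \in K -> x * y \in K.
  by move=> xK yK; rewrite -[y]invgK; apply: Kd => //; apply: Kinv.
have pwK X C : {subset X <= K} -> {subset C <= K} -> {subset pw X C <= K}.
  by move=> XK CK y /pwP [x [b [xX bB ->]]]; apply: Km; auto.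
case: (classic (exists2 k, k \in K & k \notin pw A B)) => [[k kK kA]|nA]; last first.
  have KA : forall k, k \in K -> k \in pw A B.
    move=> k kK; apply: NNPP => kn; apply: nA; exists k => //; exact/negP.
  pose Ks := [fset g in pw A B | g \in K].
  have KsE g : (g \in Ks) = (g \in K).
    rewrite !inE /=; apply/andP/idP => [[]//|gK]; split => //; exact: KA.
  have Ks1 : 1 \in Ks by rewrite KsE.
  have Ksd x y : x \in Ks -> y \in Ks -> x * y^-1 \in Ks.
    by rewrite !KsE; apply: Kd.
  have zKs : z \in Ks by rewrite KsE BK.
  have [n pn nK] := pG_sub pG Ks1 Ksd (ex_intro2 _ _ z zKs z1).
  apply: leq_trans (min_opt_leS _ pn) _; apply: leq_trans nK _.
  apply: fsubset_leq_card; apply/fsubsetP => g; rewrite !inE /= => /andP [].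
  by [].
have fA : frag K B A by split => //; exists k.
have B'1 : 1 \in finvs B by rewrite finvsP invg1.
have B'K : {subset finvs B <= K}.
  by move=> y; rewrite finvsP => /BK /Kinv; rewrite invgK.
have genB' : gen K (finvs B).
  move=> H H1 Hd sB; apply: genB => // b bB.
  have : b^-1 \in H by apply: sB; rewrite finvsP invgK.
  by move=> /(Hd _ _ H1); rewrite invgK mul1g.
pose Pk v := exists X, (frag K B X /\ (v + #|` X|)%N = #|` pw X B|) \/
                       (frag K (finvs B) X /\ (v + #|` X|)%N = #|` pw X (finvs B)|).
have [kap [[X0 hX0] kmin]] : exists n, Pk n /\ forall m, Pk m -> (n <= m)%N.
  apply: ex_min; exists (#|` pw A B| - #|` A|)%N; exists A; left; split => //.
  move: cAB; move: #|` A| #|` pw A B| => a c; lia.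
have Hm X : frag K B X -> (kap + #|` X| <= #|` pw X B|)%N.
  move=> fX; have cX := card_pw1 X B1.
  have := kmin (#|` pw X B| - #|` X|)%N.
  have : Pk (#|` pw X B| - #|` X|)%N.
    exists X; left; split => //; move: cX; move: #|` X| #|` pw X B| => a c; lia.
  move=> h /(_ h); move: cX; move: #|` X| #|` pw X B| => a c; lia.
have Hm' X : frag K (finvs B) X -> (kap + #|` X| <= #|` pw X (finvs B)|)%N.
  move=> fX; have cX := card_pw1 X B'1.
  have := kmin (#|` pw X (finvs B)| - #|` X|)%N.
  have : Pk (#|` pw X (finvs B)| - #|` X|)%N.
    exists X; right; split => //; move: cX; move: #|` X| #|` pw X (finvs B)| => a c; lia.
  move=> h /(_ h); move: cX; move: #|` X| #|` pw X (finvs B)| => a c; lia.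
pose Pa s := exists X, (frag K B X /\ #|` pw X B| = (#|` X| + kap)%N /\ #|` X| = s) \/
              (frag K (finvs B) X /\ #|` pw X (finvs B)| = (#|` X| + kap)%N /\ #|` X| = s).
have [al [[H0 hH0] amin]] : exists n, Pa n /\ forall m, Pa m -> (n <= m)%N.
  apply: ex_min; exists #|` X0|; exists X0.
  case: hX0 => [[f e]|[f e]]; [left|right]; split => //; split => //;
    move: e; move: #|` X0| (#|` pw X0 _|) => a c; lia.
have Ha X : frag K B X -> #|` pw X B| = (#|` X| + kap)%N -> (al <= #|` X|)%N.
  by move=> fX eX; apply: amin; exists X; left.
have Ha' X : frag K (finvs B) X -> #|` pw X (finvs B)| = (#|` X| + kap)%N -> (al <= #|` X|)%N.
  by move=> fX eX; apply: amin; exists X; right.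
have res : (#|` B| <= kap.+1)%N \/ exists2 n, p = Some n & (n <= kap)%N.
  case: hH0 => [[f [e a]]|[f [e a]]].
    exact: (core pG K1 Kd B1 BK genB Hm Hm' Ha Ha' f e a).
  rewrite -card_finvs.
  have Hm2 X : frag K (finvs (finvs B)) X -> (kap + #|` X| <= #|` pw X (finvs (finvs B))|)%N.
    by rewrite finvsK; apply: Hm.
  have Ha2 X : frag K (finvs (finvs B)) X -> #|` pw X (finvs (finvs B))| = (#|` X| + kap)%N ->
      (al <= #|` X|)%N.
    by rewrite finvsK; apply: Ha.
  exact: (core pG K1 Kd B'1 B'K genB' Hm' Hm2 Ha' Ha2 f e a).
have hA := Hm _ fA.
case: res => [le|[n pn nk]].
  apply: leq_trans (min_opt_le _ _) _; move: le hA.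
  move: #|` B| #|` A| #|` pw A B| => b a c; lia.
apply: leq_trans (min_opt_leS _ pn) _; move: nk hA.
move: #|` A| #|` pw A B| => a c; lia.
Qed.


Definition Kp (G : groupType) (B : {fset G}) (g : G) :=
  forall S : {pred G}, 1 \in S -> (forall x y, x \in S -> y \in S -> x * y^-1 \in S) ->
  {subset B <= S} -> g \in S.

Lemma min_opt_add p a1 a2 b : (1 <= b)%N ->
  (min_opt p (a1 + a2 + b - 1) <= min_opt p (a1 + b - 1) + min_opt p (a2 + b - 1))%N.
Proof. by case: p => [n|] /=; lia. Qed.

Lemma CD1 (G : groupType) (p : option nat) (B : {fset G}) :
  is_pG G p -> 1 \in B -> forall A : {fset G}, A != fset0 ->
  (min_opt p (#|` A| + #|` B| - 1) <= #|` pw A B|)%N.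
Proof.
move=> pG B1.
pose K : {pred G} := [pred g | `[< Kp B g >]].
have K1 : 1 \in K by rewrite /K inE; apply/asboolP => S S1 _ _.
have Kd x y : x \in K -> y \in K -> x * y^-1 \in K.
  rewrite /K !inE => /asboolP hx /asboolP hy; apply/asboolP => S S1 Sd sB.
  exact: (Sd _ _ (hx S S1 Sd sB) (hy S S1 Sd sB)).
have BK : {subset B <= K} by move=> b bB; rewrite /K inE; apply/asboolP => S _ _; apply.
have genB : gen K B.
  move=> H H1 Hd sB g; rewrite /K inE => /asboolP h.
  exact: (h [pred x | x \in H] H1 Hd sB).
have Kinv x : x \in K -> x^-1 \in K.
  by move=> xK; rewrite -[x^-1]mul1g; apply: Kd.
have Km x y : x \in K -> y \in K -> x * y \in K.
  by move=> xK yK; rewrite -[y]invgK; apply: Kd => //; apply: Kinv.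
have cB : (0 < #|` B|)%N by rewrite cardfs_gt0; apply/fset0Pn; exists 1.
move=> A; move: {2}#|` A| (leqnn #|` A|) => n; elim: n A => [|n IH] A.
  by rewrite leqn0 cardfs_eq0 => ->.
move=> leA An; have [a aA] := fset0Pn _ An.
pose A1 := [fset x in A | a^-1 * x \in K].
have A1E x : (x \in A1) = (x \in A) && (a^-1 * x \in K) by rewrite !inE.
have A1A : A1 `<=` A by apply/fsubsetP => x; rewrite A1E => /andP [].
case: (boolP (A `\` A1 == fset0)) => [/eqP A2e|A2n].
  have AK : {subset lmul a^-1 A <= K}.
    move=> y; rewrite lmulP invgK => ayA.
    have : a * y \in A1.
      apply: contraLR isT => nA1; have : a * y \in A `\` A1 by rewrite in_fsetD nA1 ayA.
      by rewrite A2e.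
    by rewrite A1E mulKg => /andP [].
  have Ln : lmul a^-1 A != fset0 by rewrite -cardfs_gt0 card_lmul cardfs_gt0.
  have := CD_K pG K1 Kd B1 BK genB AK Ln.
  by rewrite pw_lmul !card_lmul.
have a1 : a \in A1 by rewrite A1E aA mulVg K1.
have A1n : A1 != fset0 by apply/fset0Pn; exists a.
have cA := cardfsDS A1A.
have c1 : (0 < #|` A `\` A1|)%N by rewrite cardfs_gt0.
have c2 : (0 < #|` A1|)%N by rewrite cardfs_gt0.
have c3 := fsubset_leq_card A1A.
have IH1 := IH A1 ltac:(move: leA c1 c3 cA; move: #|` A| #|` A1| #|` A `\` A1| => x y w; lia) A1n.
have IH2 := IH (A `\` A1) ltac:(move: leA c1 c2 c3 cA; move: #|` A| #|` A1| #|` A `\` A1| => x y w; lia) A2n.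
have disj : pw A1 B `&` pw (A `\` A1) B = fset0.
  apply/fsetP => y; rewrite in_fsetI in_fset0; apply/negP => /andP [].
  move=> /pwP [x1 [b1 [x1A b1B ->]]] /pwP [x2 [b2 [x2A b2B e]]].
  move: x2A; rewrite in_fsetD A1E => /andP [/negP nn x2A]; apply: nn.
  rewrite x2A /=.
  have -> : x2 = x1 * b1 * b2^-1 by rewrite e mulgK.
  rewrite !mulgA -(mulgA (a^-1 * x1)).
  apply: (Km); first by move: x1A; rewrite A1E => /andP [].
  by apply: (Km); [apply: BK | apply: Kinv; apply: BK].
have sub : pw A1 B `|` pw (A `\` A1) B `<=` pw A B.
  apply/fsubsetP => y; rewrite in_fsetU => /orP [] y1.
    exact: (fsubsetP (pw_sub A1A (fsubset_refl B))).
  exact: (fsubsetP (pw_sub (fsubsetDl A A1) (fsubset_refl B))).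
have c4 := fsubset_leq_card sub.
have c5 := cardfsUI (pw A1 B) (pw (A `\` A1) B).
rewrite disj cardfs0 addn0 in c5.
have := min_opt_add p #|` A1| #|` A `\` A1| cB.
have -> : (#|` A1| + #|` A `\` A1| = #|` A|)%N.
  by move: cA c3; move: #|` A| #|` A1| #|` A `\` A1| => x y w; lia.
move: IH1 IH2 c4 c5; move: (min_opt p _) (min_opt p _) (min_opt p _) => u v w.
move: #|` pw A B| #|` pw A1 B| #|` pw (A `\` A1) B| #|` _ `|` _| => x y z t; lia.
Qed.

Lemma CD (G : groupType) (p : option nat) (A B : {fset G}) :
  is_pG G p -> A != fset0 -> B != fset0 ->
  (min_opt p (#|` A| + #|` B| - 1) <= #|` pw A B|)%N.
Proof.
move=> pG An Bn; have [b0 b0B] := fset0Pn _ Bn.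
have B1 : 1 \in rmul B b0 ^-1 by rewrite rmulP invgK mul1g.
have := CD1 pG B1 An.
by rewrite card_rmul pw_rmul card_rmul.
Qed.


Definition R (G : groupType) (c : G -> nat) (l : nat) (g : G) :=
  exists t : seq G, [/\ size t = l, (forall x, (count_mem x t <= c x)%N)
                     & foldr mul one t = g].

Lemma foldr_cat_mul (G : groupType) (s1 s2 : seq G) :
  foldr mul one (s1 ++ s2) = foldr mul one s1 * foldr mul one s2.
Proof. by elim: s1 => [|x s IH] /=; rewrite ?mul1g // IH mulgA. Qed.

Lemma min_opt_pos (G : groupType) (p : option nat) k :
  is_pG G p -> (1 <= k)%N -> (1 <= min_opt p k)%N.
Proof.
case: p => [n|] //= pG k1.
case: pG => [[s [[us _ hs] sn]] _].
have : (0 < size s)%N by case: s hs {us sn}.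
rewrite sn; lia.
Qed.

Lemma sum_ge_count (T : eqType) (V : seq T) (c : T -> nat) l :
  ((l.+1 * count (fun x => l < c x) V)%N <= \sum_(x <- V) c x)%N.
Proof.
elim: V => [|x V IH]; first by rewrite big_nil muln0.
rewrite big_cons /=; case: (ltnP l (c x)) => h /=; lia.
Qed.

Lemma sum_sub_count (T : eqType) (V : seq T) (c : T -> nat) (P : pred T) :
  (forall x, P x -> 0 < c x)%N ->
  (\sum_(x <- V) (c x - P x) + count P V = \sum_(x <- V) c x)%N.
Proof.
move=> P1; elim: V => [|x V IH]; first by rewrite !big_nil.
rewrite !big_cons /=; have := P1 x; case: (P x) => /= h; [have := h isT|]; lia.
Qed.

Lemma sum_min_count (T : eqType) (V : seq T) (c : T -> nat) (P : pred T) l :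
  (forall x, P x -> 0 < c x)%N -> (forall x, x \in V -> ~~ P x -> c x <= l)%N ->
  (\sum_(x <- V) minn l (c x - P x) + count P V = \sum_(x <- V) minn l.+1 (c x))%N.
Proof.
move=> P1 P2; elim: V P2 => [|x V IH] P2; first by rewrite !big_nil.
rewrite !big_cons /=.
have IH' := IH (fun y yV => P2 y ltac:(by rewrite in_cons yV orbT)).
have := P1 x; have := P2 x (mem_head _ _); case: (P x) => /= h1 h2;
  [have := h2 isT | have := h1 isT]; lia.
Qed.

Lemma sum_minn_ge (T : eqType) (V : seq T) (f : T -> nat) l :
  (minn l (\sum_(x <- V) f x) <= \sum_(x <- V) minn l (f x))%N.
Proof.
elim: V => [|x V IH]; first by rewrite !big_nil; lia.
rewrite !big_cons; lia.
Qed.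

Lemma mainS (G : groupType) (p : option nat) : is_pG G p ->
  forall l (V : seq G) (c : G -> nat), uniq V -> (l <= \sum_(x <- V) c x)%N ->
  exists L : {fset G}, (forall g, g \in L -> R c l g) /\
    (min_opt p (\sum_(x <- V) minn l (c x) - l + 1) <= #|` L|)%N.
Proof.
move=> pG l V; elim: l => [|l IH] c uV hS.
  exists [fset 1]; split.
    by move=> g; rewrite in_fset1 => /eqP ->; exists [::].
  rewrite cardfs1 big1; first exact: min_opt_le.
  by move=> x _; exact: min0n.
have [P [P1 P2 P3 P4]] : exists P : pred G,
    [/\ forall x, P x -> (0 < c x)%N, forall x, x \in V -> ~~ P x -> (c x <= l)%N,
        (l + count P V <= \sum_(x <- V) c x)%N & has P V].
  case: (boolP (has (fun x => l < c x)%N V)) => hP.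
    exists (fun x => l < c x)%N; split => //.
    - by move=> x; lia.
    - by move=> x _; rewrite -leqNgt.
    - have := sum_ge_count V c l; have := hP; rewrite has_count.
      move: (count _ V) (\sum_(x <- V) c x) => k s; nia.
  have [x0 x0V cx0] : exists2 x0, x0 \in V & (0 < c x0)%N.
    case: (boolP (has (fun x => 0 < c x)%N V)) => [/hasP [x0 x0V h]|/hasPn h0].
      by exists x0.
    exfalso; move: hS; rewrite big1_seq // => x /andP [_ xV].
    by have := h0 x xV; case: (c x).
  exists (pred1 x0); split.
  - by move=> x /= /eqP ->.
  - by move=> x xV _; move/hasPn: hP => /(_ x xV); rewrite -leqNgt.
  - by rewrite (count_uniq_mem _ uV) x0V addn1.
  - by apply/hasP; exists x0 => //=.
pose c' := fun x => (c x - P x)%N.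
have e1 := @sum_sub_count _ V _ _ P1.
have hS' : (l <= \sum_(x <- V) c' x)%N.
  by move: e1 P3; rewrite /c'; move: (\sum_(x <- V) (c x - P x))%N (count P V) (\sum_(x <- V) c x) => a b d; lia.
have [L' [HR' hb']] := IH c' uV hS'.
have e2 := sum_min_count (V:=V) P1 P2.
have hS'' := sum_minn_ge V c' l.
pose W := [fset x in [seq x <- V | P x]].
have WE x : (x \in W) = (x \in V) && P x by rewrite !inE mem_filter andbC.
have cW : #|` W| = count P V.
  by rewrite card_fseq undup_id ?filter_uniq // size_filter.
have Wn : W != fset0.
  by move/hasP: P4 => [x xV Px]; apply/fset0Pn; exists x; rewrite WE xV.
have L'n : L' != fset0.
  rewrite -cardfs_gt0; apply: leq_trans hb'; apply: min_opt_pos pG _; lia.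
have hCD := CD pG L'n Wn.
exists (pw L' W); split.
  move=> g /pwP [g' [w [g'L wW ->]]].
  have [t [st ct pt]] := HR' g' g'L.
  exists (t ++ [:: w]); split.
  - by rewrite size_cat st addn1.
  - move=> x; rewrite count_cat /= addn0; have := ct x; rewrite /c'.
    move: wW; rewrite WE => /andP [_ Pw].
    case: (eqVneq w x) => [<-|] /=; last by rewrite addn0 => h; lia.
    by rewrite Pw; have := P1 w Pw; lia.
  - by rewrite foldr_cat_mul pt /= mulg1.
have hmin : (minn l (\sum_(x <- V) c' x) = l) by lia.
rewrite hmin in hS''.
move: hb' hCD; rewrite cW -e2 /c'.
have cP : (1 <= count P V)%N by rewrite -has_count.
move: cP hS''; rewrite /c'.
move: (count P V) (\sum_(x <- V) minn l (c x - P x))%N #|` L'| #|` pw L' W| => k s a b.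
by case: p {pG IH} => [n|] /=; lia.
Qed.

End Aux.

Lemma idx_lemma (G : groupType) m (a : 'I_m -> G) : forall (t : seq G) (D : {set 'I_m}),
  (forall x, count_mem x t <= #|[set i in D | a i == x]|) ->
  exists f : seq 'I_m, [/\ uniq f, map a f = t & {subset f <= D}].
Proof.
elim=> [|x t IH] D hc; first by exists [::].
have := hc x; rewrite /= eqxx add1n => /(leq_trans (ltn0Sn _)) /card_gt0P [i].
rewrite inE => /andP [iD /eqP aix].
have Sd y : [set j in D :\ i | a j == y] = [set j in D | a j == y] :\ i.
  by apply/setP => j; rewrite !inE andbA.
have [f [uf mf sf]] : exists f : seq 'I_m, [/\ uniq f, map a f = t & {subset f <= D :\ i}].
  apply: IH => y; rewrite Sd.
  have := cardsD1 i [set j in D | a j == y]; rewrite !inE iD aix /=.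
  have := hc y; rewrite /= .
  case: (eqVneq x y) => [<-|ne] /=; first by lia.
  by move=> h1 h2; lia.
exists (i :: f); split.
- by rewrite /= uf andbT; apply/negP => /sf; rewrite !inE eqxx.
- by rewrite /= aix mf.
- by move=> j; rewrite in_cons => /orP [/eqP ->//|/sf]; rewrite !inE => /andP [].
Qed.

Lemma big_nth_map (G : groupType) m (a : 'I_m -> G) (i0 : 'I_m) (f : seq 'I_m) :
  \big[mul/one]_(k < size f) a (nth i0 f k) = foldr mul one (map a f).
Proof.
rewrite -(big_mkord xpredT (fun k => a (nth i0 f k))) -(big_nth i0 xpredT a).
by elim: f => [|j f IH]; rewrite ?big_nil ?big_cons //= IH.
Qed.

Theorem theorem6p2 (G : groupType) (l m : nat) (a : 'I_m -> G)
    (p : option nat) :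
  0 < l -> l <= m -> @is_pG G p ->
  min_opt p ((\sum_(x <- undup (codom a)) mu l a x) - l + 1)
    <= size (sigma_l l a).
Proof.
move=> hl hlm pG.
have hc x : rho a x = count_mem x (codom a).
  by rewrite /rho cardE size_filter codomE count_map enumT.
have Hsum : \sum_(x <- undup (codom a)) rho a x = m.
  under eq_bigr do rewrite hc.
  transitivity (size (codom a)); last by rewrite size_codom card_ord.
  rewrite -sum1_size.
  rewrite -(big_undup_iterop_count _ (codom a) xpredT (fun _ => 1%N)).
  by apply: eq_bigr => x _; rewrite Monoid.iteropE iter_addn mul1n addn0.
have [L [HR Hb]] := mainS pG (undup_uniq (codom a)) (c := rho a) (l := l)
  ltac:(by rewrite Hsum).
apply: leq_trans Hb _.
apply: (uniq_leq_size (fset_uniq L)) => g gL.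
have [t [st ct pt]] := HR g gL.
have [f [uf mf sf0]] : exists f : seq 'I_m, [/\ uniq f, map a f = t & {subset f <= [set: 'I_m]}].
  apply: idx_lemma => x; apply: leq_trans (ct x) _.
  by rewrite /rho; apply: eq_leq; apply: eq_card => i; rewrite !inE.
have i0 : 'I_m := Ordinal (leq_trans hl hlm).
have sf : size f = l by rewrite -(size_map a) mf st.
rewrite /sigma_l mem_undup; apply/mapP; exists [ffun k : 'I_l => nth i0 f k].
  rewrite mem_filter mem_enum andbT; apply/injectiveP => k1 k2; rewrite !ffunE.
  move=> /eqP; rewrite nth_uniq ?sf // => /eqP e; exact: ord_inj.
rewrite -pt -mf; under eq_bigr do rewrite ffunE.
by rewrite -(big_nth_map a i0) sf.
Qed.
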